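(* Let $d\ge 2$ and let $g:[-1,1]\to(-\infty,\infty]$ be a function that is finite and continuous on $[-1,1)$ with $g(1)=\lim_{t\to1^-}g(t)$, differentiable on $(-1,1)$, and such that $g''$ exists and is non-negative and convex on $(-1,1)$. Let $\omega_{2d}$ be any antipodal configuration of $2d$ points on $S^{d-1}$, and let $\overline\omega_{2d}=\{\pm\mathbf a_1,\ldots,\pm\mathbf a_d\}$, where $\{\mathbf a_1,\dots,\mathbf a_d\}$ is an orthonormal basis of $\mathbb R^d$. Then $$P^g(\omega_{2d},S^{d-1})\leq P^g(\overline\omega_{2d},S^{d-1})=d\left(g\left(\tfrac1{\sqrt d}\right)+g\left(-\tfrac1{\sqrt d}\right)\right).$$
   Context: $S^{d-1}$ is the unit sphere in $\mathbb R^d$. A configuration is a list of points (points may coincide); it is antipodal if together with $\mathbf x$ it contains $-\mathbf x$. For a configuration $\omega_N=\{\mathbf x_1,\ldots,\mathbf x_N\}\subset S^{d-1}$, $P^g(\omega_N,S^{d-1}):=\min_{\mathbf x\in S^{d-1}}\sum_{i=1}^N g(\mathbf x\cdot\mathbf x_i)$. *)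

(* Defs.v *)
From HB Require Import structures.
From mathcomp Require Import all_boot all_order all_algebra.
From mathcomp Require Import all_classical all_reals all_analysis.
Set Implicit Arguments. Unset Strict Implicit. Unset Printing Implicit Defensive.
Import Order.TTheory GRing.Theory Num.Theory.
Import numFieldNormedType.Exports.
Local Open Scope classical_set_scope.
Local Open Scope ring_scope.

Definition dotv (R : realType) (d : nat) (u v : 'rV[R]_d) : R :=
  \sum_(k < d) u 0 k * v 0 k.

Definition sphere (R : realType) (d : nat) : set 'rV[R]_d :=
  [set x | dotv x x = 1].

Definition on_sphere (R : realType) (d N : nat) (w : 'I_N -> 'rV[R]_d) :=
  forall i, w i \in @sphere R d.

(* antipodal: as a multiset, the configuration equals its negative *)
Definition antipodal (R : realType) (d N : nat) (w : 'I_N -> 'rV[R]_d) :=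
  exists s : 'I_N -> 'I_N, bijective s /\ forall i, w (s i) = - w i.

(* P^g(w, S^{d-1}) = min over x in S^{d-1} of sum_i g(x . x_i)
   (stated as an infimum in the extended reals) *)
Definition Pg (R : realType) (d N : nat) (g : R -> \bar R)
    (w : 'I_N -> 'rV[R]_d) : \bar R :=
  ereal_inf [set (\sum_(i < N) g (dotv x (w i)))%E | x in @sphere R d].

Definition convex_on_oo (R : realType) (a b : R) (h : R -> R) :=
  forall x y l : R, a < x < b -> a < y < b -> 0 <= l <= 1 ->
    h (l * x + (1 - l) * y) <= l * h x + (1 - l) * h y.

Definition cross_config (R : realType) (d : nat) (a : 'I_d -> 'rV[R]_d)
  : 'I_(d + d) -> 'rV[R]_d :=
  fun i => match fintype.split i with inl j => a j | inr j => - a j end.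

(* Main.v *)
Require Import Defs.
From HB Require Import structures.
From mathcomp Require Import all_boot all_order all_algebra.
From mathcomp Require Import all_classical all_reals all_analysis.
From mathcomp Require Import ring lra.
Import Order.TTheory GRing.Theory Num.Theory.
Import numFieldNormedType.Exports.
Local Open Scope classical_set_scope.
Local Open Scope ring_scope.


Lemma is_derive_negc {R : realType} {f : R -> R} {t : R} :
  derivable f (- t) 1 -> is_derive t 1 (fun x => f (- x)) (- derive1 f (- t)).
Proof.
move=> df.
have dN : derivable (-%R : R -> R) t 1 by apply: ex_derive.
have dc : derivable (f \o -%R) t 1.
  by apply/derivable1_diffP; apply: differentiable_comp; apply/derivable1_diffP.
have := derivableP dc; rewrite -derive1E (derive1_comp dN df).
have -> : derive1 (-%R : R -> R) t = -1 by rewrite derive1E derive_val.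
by rewrite mulrN1.
Qed.

Definition GH {R : realType} (G : R -> R) :=
  [/\ (forall t : R, -1 < t < 1 -> derivable G t 1),
      (forall t : R, -1 < t < 1 -> derivable (derive1 G) t 1),
      convex_on_oo (-1) 1 (derive1n 2 G) &
      (forall t : R, -1 < t < 1 -> 0 <= derive1n 2 G t)].

Definition hh {R : realType} (G : R -> R) (t : R) := G t + G (- t).
Definition H1 {R : realType} (G : R -> R) (t : R) := derive1 G t - derive1 G (- t).
Definition H2 {R : realType} (G : R -> R) (t : R) :=
  derive1n 2 G t + derive1n 2 G (- t).

Lemma in11N {R : realType} {t : R} : -1 < t < 1 -> -1 < - t < 1.
Proof. by move=> /andP[a b]; rewrite ltrNl opprK b ltrNl a. Qed.

Lemma dhh {R : realType} {G : R -> R} {t : R} : GH G -> -1 < t < 1 ->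
  is_derive t 1 (hh G) (H1 G t).
Proof.
move=> [d1 d2 _ _] ht.
have A := derivableP (d1 _ ht); rewrite -derive1E in A.
have B := is_derive_negc (d1 _ (in11N ht)).
exact: (is_deriveD A B).
Qed.

Lemma dH1 {R : realType} {G : R -> R} {t : R} : GH G -> -1 < t < 1 ->
  is_derive t 1 (H1 G) (H2 G t).
Proof.
move=> [d1 d2 _ _] ht.
have A := derivableP (d2 _ ht); rewrite -derive1E in A.
have B := is_derive_negc (d2 _ (in11N ht)).
have C := is_deriveN B.
rewrite /H2 /= -[X in _ + X]opprK.
exact: (is_deriveD A C).
Qed.

Lemma H2mono {R : realType} {G : R -> R} {t u : R} : GH G ->
  0 <= t <= u -> u < 1 -> H2 G t <= H2 G u.
Proof.
move=> [_ _ cv _] /andP[t0 tu] u1.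
have u0 : 0 <= u by apply: le_trans tu.
case: (eqVneq u 0) => [u00|un0].
  have -> : t = u by rewrite u00 in tu *; lra.
  by [].
have up : 0 < u by rewrite lt_def un0 u0.
set l := (t + u) / (2 * u).
have hu : -1 < u < 1 by rewrite u1 andbT (lt_le_trans _ u0) // ltrN10.
have hNu : -1 < - u < 1 := in11N hu.
have l0 : 0 <= l <= 1.
  rewrite /l divr_ge0 ?addr_ge0 ?mulr_ge0 //= ler_pdivrMr ?mulr_gt0 //.
  by rewrite mul1r mulr_natl mulr2n lerD2r.
have e1 : l * u + (1 - l) * - u = t.
  rewrite /l; field; by rewrite un0.
have e2 : l * - u + (1 - l) * u = - t.
  rewrite /l; field; by rewrite un0.
have c1 := cv _ _ _ hu hNu l0; rewrite e1 in c1.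
have c2 := cv _ _ _ hNu hu l0; rewrite e2 in c2.
rewrite /H2; apply: le_trans (lerD c1 c2) _.
move: (derive1n 2 G u) (derive1n 2 G (- u)) => p q.
by rewrite le_eqVlt; apply/orP; left; apply/eqP; ring.
Qed.

Lemma H2nn {R : realType} {G : R -> R} {t : R} : GH G -> -1 < t < 1 ->
  0 <= H2 G t.
Proof.
move=> [_ _ _ nn] ht; rewrite /H2 addr_ge0 //; first exact: nn.
exact: nn (in11N ht).
Qed.

Lemma MVT11 {R : realType} {f df : R -> R} {a b : R} :
  -1 < a -> a < b -> b < 1 ->
  (forall x : R, -1 < x < 1 -> is_derive x 1 f (df x)) ->
  exists2 c, a < c < b & f b - f a = df c * (b - a).
Proof.
move=> a1 ab b1 D.
have inab (x : R) : a <= x <= b -> -1 < x < 1.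
  by move=> /andP[ax xb]; rewrite (lt_le_trans a1 ax) (le_lt_trans xb b1).
have h1 : forall x, x \in `]a, b[ -> is_derive x 1 f (df x).
  move=> x; rewrite in_itv /= => /andP[ax xb]; apply: D; apply: inab.
  by rewrite !ltW.
have h2 : {within `[a, b], continuous f}.
  apply: derivable_within_continuous => x; rewrite in_itv /= => xab.
  by have := D x (inab x xab) => [[]].
have [c cab E] := @MVT R f df a b ab h1 h2.
by exists c => //; move: cab; rewrite in_itv.
Qed.

Lemma H10 {R : realType} (G : R -> R) : H1 G 0 = 0.
Proof. by rewrite /H1 oppr0 subrr. Qed.

Lemma H1eq {R : realType} {G : R -> R} {c : R} : GH G -> 0 < c < 1 ->
  exists2 e, 0 < e < c & H1 G c = H2 G e * c.
Proof.
move=> hG /andP[c0 c1].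
have [e ce E] := MVT11 (ltrN10 R) c0 c1 (fun x hx => dH1 hG hx).
by exists e => //; rewrite H10 !subr0 in E.
Qed.

Lemma H1nn {R : realType} {G : R -> R} {c : R} : GH G -> 0 <= c < 1 ->
  0 <= H1 G c.
Proof.
move=> hG /andP[c0 c1]; case: (eqVneq c 0) => [->|cn0]; first by rewrite H10.
have cp : 0 < c by rewrite lt_def cn0 c0.
have [e /andP[e0 ec] ->] := H1eq hG (introT andP (conj cp c1)).
apply: mulr_ge0 => //; apply: H2nn hG _.
by rewrite (lt_trans _ e0) ?ltrN10 // (lt_trans ec c1).
Qed.

Lemma kmono {R : realType} {G : R -> R} {a b : R} : GH G -> 0 < a -> a < b -> b < 1 ->
  b * H1 G a <= a * H1 G b.
Proof.
move=> hG a0 ab b1.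
have a1 : a < 1 by apply: lt_trans b1.
have [e1 /andP[e10 e1a] E1] := H1eq hG (introT andP (conj a0 a1)).
have [e2 /andP[ae2 e2b] E2] := MVT11 (lt_trans (ltrN10 R) a0) ab b1 (fun x hx => dH1 hG hx).
have -> : H1 G b = H1 G a + H2 G e2 * (b - a) by rewrite -E2; ring.
rewrite E1.
have h1 : H2 G e1 <= H2 G e2.
  apply: H2mono hG _ (lt_trans e2b b1).
  by rewrite ltW //= ltW // (lt_trans e1a ae2).
have h2 : 0 <= a * (b - a) by rewrite mulr_ge0 ?ltW // subr_gt0.
rewrite -subr_ge0.
rewrite -subr_ge0 in h1; move: h1; move: (H2 G e1) (H2 G e2) => p q h1.
have -> : a * (p * a + q * (b - a)) - b * (p * a)
  = a * (b - a) * (q - p) by ring.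
by rewrite mulr_ge0.
Qed.

Lemma hmono {R : realType} {G : R -> R} {a b : R} : GH G -> 0 <= a -> a <= b -> b < 1 ->
  hh G a <= hh G b.
Proof.
move=> hG a0 ab b1; case: (eqVneq a b) => [->//|anb].
have ab' : a < b by rewrite lt_def eq_sym anb ab.
have [e /andP[ae eb] E] := MVT11 (lt_le_trans (ltrN10 R) a0) ab' b1 (fun x hx => dhh hG hx).
have : 0 <= H1 G e * (b - a).
  apply: mulr_ge0; last by rewrite subr_ge0.
  apply: (H1nn hG); rewrite (lt_trans eb b1) andbT.
  by apply: ltW; apply: le_lt_trans ae.
by rewrite -E subr_ge0.
Qed.

Lemma is_derive_subsq {R : realType} (h dh : R -> R) (m x : R) : is_derive x 1 h (dh x) ->
  is_derive x 1 (fun y => h y - m * (y * y)) (dh x - m * (2 * x)).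
Proof.
move=> A.
have B := is_deriveM (is_derive_id x 1) (is_derive_id x 1).
have C := is_deriveZ m B.
have D := is_deriveB A C.
set F := (X in is_derive _ _ X _) in D.
have -> : (fun y => h y - m * (y * y)) = F by apply/funext => y.
have -> : dh x - m * (2 * x) = dh x - m *: (x%:A + x%:A).
  by rewrite /GRing.scale /= mulr1; congr (_ - _ * _); rewrite mulr2n ?mulr_natl; ring.
exact: D.
Qed.


Lemma phi_ineq {R : realType} {G : R -> R} {s t : R} : GH G -> 0 < s < 1 -> 0 <= t < 1 ->
  hh G s + H1 G s / (2 * s) * (t * t - s * s) <= hh G t.
Proof.
move=> hG /andP[s0 s1] /andP[t0 t1].
set m := H1 G s / (2 * s).
have D : forall x : R, -1 < x < 1 ->
    is_derive x 1 (fun y => hh G y - m * (y * y)) (H1 G x - m * (2 * x)).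
  by move=> x hx; apply: is_derive_subsq; apply: dhh.
suff : hh G s - m * (s * s) <= hh G t - m * (t * t) by lra.
have sn0 : s != 0 by rewrite gt_eqF.
have [ts|st|->] := ltgtP t s; last by [].
- have [e /andP[te es] E] := MVT11 (lt_le_trans (ltrN10 R) t0) ts s1 D.
  have e0 : 0 < e by apply: le_lt_trans te.
  have K := kmono hG e0 es s1.
  have : H1 G e - m * (2 * e) <= 0.
    rewrite /m subr_le0.
    have -> : H1 G s / (2 * s) * (2 * e) = e * H1 G s / s.
      by move: (H1 G s) => p; field.
    by rewrite ler_pdivlMr // mulrC.
  have : 0 < s - t by rewrite subr_gt0.
  move: E; set u := H1 G e - m * (2 * e) => E h1 h2.
  rewrite -subr_ge0 -opprB oppr_ge0 E.
  by rewrite mulr_le0_ge0 // ltW.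
- have [e /andP[se et] E] := MVT11 (lt_trans (ltrN10 R) s0) st t1 D.
  have K := kmono hG s0 se (lt_trans et t1).
  have : 0 <= H1 G e - m * (2 * e).
    rewrite /m subr_ge0.
    have -> : H1 G s / (2 * s) * (2 * e) = e * H1 G s / s.
      by move: (H1 G s) => p; field.
    by rewrite ler_pdivrMr // [X in _ <= X]mulrC.
  have : 0 < t - s by rewrite subr_gt0.
  move: E; set u := H1 G e - m * (2 * e) => E h1 h2.
  by rewrite -subr_ge0 E mulr_ge0 // ltW.
Qed.


Lemma left1_lt {R : realType} : \forall y \near (1 : R)^'-, y < 1.
Proof. by rewrite near_withinE; apply: nearW. Qed.

Lemma Gm1 {R : realType} {G : R -> R} : {within `[-1, 1[, continuous G} ->
  G (- t) @[t --> (1 : R)^'-] --> G (-1).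
Proof.
move=> gc.
have gc' : {within `[-1, 0], continuous G}.
  apply: continuous_subspaceW gc => x /=; rewrite !in_itv /= => /andP[-> x0].
  by rewrite (le_lt_trans x0 ltr01).
have [_ h _] := (continuous_within_itvP _ (ltrN10 R)).1 gc'.
have := (cvg_at_rightNP G (-1) (G (-1))).1 h.
by rewrite opprK.
Qed.

Lemma endpoint {R : realType} (g : R -> \bar R) (c m : R) :
  (forall t : R, -1 <= t < 1 -> g t \is a fin_num) ->
  {within `[-1, 1[, continuous (fine \o g)} ->
  g t @[t --> (1 : R)^'-] --> g 1 ->
  (forall t : R, 0 < t < 1 -> c + m * (t * t) <= fine (g t) + fine (g (- t))) ->
  ((c + m)%:E <= g 1%R + g (-1)%R)%E.
Proof.
move=> gfin gc g1 H.
have gm1 : g (-1) = (fine (g (-1)))%:E.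
  by rewrite fineK // gfin // lexx /= -subr_gt0 opprK; lra.
have p : (fun t : R => c + m * (t * t)) @ (1 : R)^'- --> c + m * (1 * 1).
  apply: cvgD; first exact: cvg_cst.
  apply: cvgM; first exact: cvg_cst.
  by apply: cvgM; apply: cvg_at_left_filter; exact: cvg_id.
have q := cvgB p (Gm1 gc).
have ce : (fun t => (c + m * (t * t) - (fine \o g) (- t))%:E) @ (1 : R)^'- -->
     (c + m * (1 * 1) - (fine \o g) (-1))%:E.
  by apply: cvg_EFin; [exact: nearW | exact: q].
have le : ((c + m * (1 * 1) - (fine \o g) (-1))%:E <= g 1%R)%E.
  apply: (lee_cvg_to ce g1).
  near=> t.
  have t0 : 0 < t by near: t; exact: nbhs_left_gt.
  have t1 : t < 1 by near: t; exact: left1_lt.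
  have gt : g t = (fine (g t))%:E by rewrite fineK // gfin // t1 andbT ltW // (lt_trans _ t0) // ltrN10.
  rewrite gt lee_fin /=.
  have := H t (introT andP (conj t0 t1)); lra.
rewrite gm1; move: le; case: (g 1%R) => [r||] //=; rewrite ?lee_fin.
- by move=> h; rewrite !mulr1 in h; lra.
- by move=> _; rewrite addye ?leey.
Unshelve. all: by end_near.
Qed.


Section dotv_lemmas.
Context {R : realType} {d : nat}.
Implicit Types u v x : 'rV[R]_d.

Lemma dotvC u v : dotv u v = dotv v u.
Proof. by rewrite /dotv; apply: eq_bigr => k _; rewrite mulrC. Qed.

Lemma dotvDl u v x : dotv (u + v) x = dotv u x + dotv v x.
Proof. by rewrite /dotv -big_split; apply: eq_bigr => k _; rewrite !mxE mulrDl. Qed.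

Lemma dotvZl (a : R) u x : dotv (a *: u) x = a * dotv u x.
Proof. by rewrite /dotv mulr_sumr; apply: eq_bigr => k _; rewrite !mxE mulrA. Qed.

Lemma dotvNl u x : dotv (- u) x = - dotv u x.
Proof. by rewrite -scaleN1r dotvZl mulN1r. Qed.

Lemma dotvBl u v x : dotv (u - v) x = dotv u x - dotv v x.
Proof. by rewrite dotvDl dotvNl. Qed.

Lemma dotvDr u v x : dotv x (u + v) = dotv x u + dotv x v.
Proof. by rewrite dotvC dotvDl !(dotvC x). Qed.

Lemma dotvZr (a : R) u x : dotv x (a *: u) = a * dotv x u.
Proof. by rewrite dotvC dotvZl dotvC. Qed.

Lemma dotvNr u x : dotv x (- u) = - dotv x u.
Proof. by rewrite dotvC dotvNl dotvC. Qed.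

Lemma dotvBr u v x : dotv x (u - v) = dotv x u - dotv x v.
Proof. by rewrite dotvDr dotvNr. Qed.

Lemma dotv_suml (I : finType) (F : I -> 'rV[R]_d) x :
  dotv (\sum_i F i) x = \sum_i dotv (F i) x.
Proof.
rewrite /dotv exchange_big /=; apply: eq_bigr => k _.
by rewrite summxE mulr_suml.
Qed.

Lemma dotv_sumr (I : finType) (F : I -> 'rV[R]_d) x :
  dotv x (\sum_i F i) = \sum_i dotv x (F i).
Proof. by rewrite dotvC dotv_suml; apply: eq_bigr => i _; rewrite dotvC. Qed.

Lemma dotv_ge0 u : 0 <= dotv u u.
Proof. by rewrite /dotv sumr_ge0 // => k _; rewrite -expr2 sqr_ge0. Qed.

Lemma dotv_eq0 u : dotv u u = 0 -> u = 0.
Proof.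
move=> /eqP; rewrite /dotv psumr_eq0 => [/allP H|k _]; last by rewrite -expr2 sqr_ge0.
apply/rowP => k; rewrite mxE; apply/eqP.
by have := H k (mem_index_enum k); rewrite -expr2 sqrf_eq0.
Qed.

Lemma dotv_mx u v : dotv u v = (u *m v^T) 0 0.
Proof. by rewrite /dotv !mxE; apply: eq_bigr => k _; rewrite !mxE. Qed.

End dotv_lemmas.

Lemma orth_complete {R : realType} {d : nat} (a : 'I_d -> 'rV[R]_d) :
  (forall i j, dotv (a i) (a j) = (i == j)%:R) ->
  forall x, \sum_i dotv x (a i) ^+ 2 = dotv x x.
Proof.
move=> ha x.
pose A : 'M[R]_d := \matrix_(i, k) a i 0 k.
have AA : A *m A^T = 1%:M.
  apply/matrixP => i j; rewrite !mxE -ha /dotv.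
  by apply: eq_bigr => k _; rewrite !mxE.
have AA' := mulmx1C AA.
pose v := x *m A^T.
have ve i : v 0 i = dotv x (a i).
  by rewrite !mxE /dotv; apply: eq_bigr => k _; rewrite !mxE.
have -> : \sum_i dotv x (a i) ^+ 2 = dotv v v.
  by rewrite /dotv; apply: eq_bigr => i _; rewrite ve expr2.
rewrite !dotv_mx /v trmx_mul trmxK -!mulmxA (mulmxA A^T) AA' mul1mx.
by [].
Qed.

Lemma greedy {R : realType} {d : nat} (F : nat -> 'rV[R]_d) (n : nat) :
  exists y : nat -> R, (forall k, y k = 1 \/ y k = -1) /\
   \sum_(k < n) dotv (F k) (F k) <=
   dotv (\sum_(k < n) y k *: F k) (\sum_(k < n) y k *: F k).
Proof.
elim: n => [|n [y' [hy' IH]]].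
  by exists (fun _ => 1); split; [left|rewrite big_ord0 dotv_ge0].
set S := \sum_(k < n) y' k *: F k in IH.
pose sg : R := if 0 <= dotv S (F n) then 1 else -1.
exists (fun k => if k == n then sg else y' k); split.
  by move=> k; case: (k == n); [rewrite /sg; case: ifP => _; [left|right]|].
rewrite !big_ord_recr /= eqxx.
have -> : \sum_(i < n) (if (widen_ord (leqnSn n) i : nat) == n then sg else y' (widen_ord (leqnSn n) i)) *: F (widen_ord (leqnSn n) i) = S.
  by apply: eq_bigr => i _; rewrite /= ltn_eqF.
rewrite dotvDl !dotvDr !dotvZl !dotvZr (dotvC (F n) S).
have h1 : 0 <= sg * dotv S (F n).
  rewrite /sg; case: ifP => h; first by rewrite mul1r.
  by rewrite mulN1r oppr_ge0; apply: ltW; rewrite ltNge h.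
have h2 : sg * sg = 1 by rewrite /sg; case: ifP => _; rewrite ?mulr1 ?mulrNN ?mulr1.
rewrite mulrA h2 mul1r.
lra.
Qed.

Lemma normalize_ok {R : realType} {d : nat} {v : 'rV[R]_d} : 0 < dotv v v ->
  let x := (Num.sqrt (dotv v v))^-1 *: v in
  dotv x x = 1 /\ forall u, dotv x u = (Num.sqrt (dotv v v))^-1 * dotv v u.
Proof.
move=> vp x; split; last by move=> u; rewrite dotvZl.
rewrite /x dotvZl dotvZr mulrA -invfM -expr2 sqr_sqrtr ?ltW //.
by rewrite mulVf // gt_eqF.
Qed.

Lemma LA {R : realType} {d : nat} (b : 'I_d -> 'rV[R]_d) : (0 < d)%N ->
  (forall j, dotv (b j) (b j) = 1) ->
  exists x, dotv x x = 1 /\ forall j, `|dotv x (b j)| <= 1 / Num.sqrt d%:R.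
Proof.
move=> d0 hb.
have sd0 : 0 < Num.sqrt (d%:R : R) by rewrite sqrtr_gt0 ltr0n.
pose B : 'M[R]_d := \matrix_(j, k) b j 0 k.
have vpos : forall v : 'rV[R]_d, v != 0 -> 0 < dotv v v.
  move=> v vn0; rewrite lt_def dotv_ge0 andbT; apply/eqP => /dotv_eq0 v0.
  by rewrite v0 eqxx in vn0.
case: (eqVneq (\det B) 0) => [dB|dB].
  have : \det B^T == 0 by rewrite det_tr dB.
  move/det0P => [v vn0 vB].
  have [xx xb] := normalize_ok (vpos v vn0).
  eexists; split; first exact: xx.
  move=> j; rewrite xb.
  have -> : dotv v (b j) = 0.
    have := congr1 (fun M : 'rV_d => M 0 j) vB; rewrite !mxE => <-.
    by rewrite /dotv; apply: eq_bigr => k _; rewrite !mxE.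
  by rewrite mulr0 normr0 divr_ge0 // ltW.
have Bu : B \in unitmx by rewrite unitmxE unitfE.
pose C := invmx B.
have BC := mulmxV Bu.
pose c (j : 'I_d) : 'rV[R]_d := \row_k C k j.
have bc i j : dotv (b i) (c j) = (i == j)%:R.
  have := congr1 (fun M : 'M[R]_d => M i j) BC; rewrite !mxE => <-.
  by rewrite /dotv; apply: eq_bigr => k _; rewrite !mxE.
have cc j : 1 <= dotv (c j) (c j).
  have := dotv_ge0 (c j - b j).
  rewrite !dotvBl !dotvBr hb (dotvC (c j) (b j)) bc eqxx /=; lra.
pose j0 := Ordinal d0.
have [y [hy hz]] := greedy (fun k => c (insubd j0 k)) d.
have ce : forall k : 'I_d, insubd j0 (k : nat) = k.
  by move=> k; apply: val_inj; rewrite val_insubd ltn_ord.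
set z := \sum_(k < d) y k *: c (insubd j0 k) in hz.
have zz : d%:R <= dotv z z.
  apply: le_trans hz; under eq_bigr => k _ do rewrite ce.
  have -> : (d%:R : R) = \sum_(k < d) (1 : R) by rewrite sumr_const card_ord.
  by apply: ler_sum => k _; exact: cc.
have zp : 0 < dotv z z by apply: lt_le_trans zz; rewrite ltr0n.
have [xx xb] := normalize_ok zp.
eexists; split; first exact: xx.
move=> j.
have zb : dotv z (b j) = y j.
  rewrite /z dotv_suml.
  under eq_bigr => k _ do rewrite ce dotvZl (dotvC (c k)) bc.
  rewrite (bigD1 j) //= eqxx mulr1 big1 ?addr0 //.
  by move=> k /negbTE; rewrite eq_sym => ->; rewrite mulr0.
rewrite xb zb.
rewrite normrM ger0_norm ?invr_ge0 ?sqrtr_ge0 //.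
have -> : `|y j| = 1 by case: (hy j) => ->; rewrite ?normrN normr1.
rewrite mulr1 div1r lef_pV2 ?posrE ?sqrtr_gt0 //.
rewrite ler_sqrt // ?ltW //. by rewrite ltr0n.
Qed.


Lemma seqpair {R : realType} {d : nat} (n : nat) (l : seq 'rV[R]_d) :
  size l = (n + n)%N -> (forall v, v \in l -> dotv v v = 1) ->
  perm_eq l (map -%R l) ->
  exists b : seq 'rV[R]_d, [/\ size b = n, {subset b <= l} &
    forall v, v \in l -> v \in b \/ - v \in b].
Proof.
elim: n l => [|n IH] l.
  by case: l => // _ _ _; exists [::]; split => //.
case: l => [//|v l'] /= hs hu hp.
have hv : - v \in v :: l'.
  by rewrite (perm_mem hp) /= in_cons eqxx.
have hneq : - v != v.
  apply/eqP => e; have := hu v (mem_head _ _).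
  have := dotvNl v v; rewrite e => ->; rewrite hu ?mem_head //; lra.
have hv' : - v \in l' by move: hv; rewrite in_cons (negbTE hneq).
have P1 := perm_to_rem hv'.
set l'' := rem (- v) l' in P1.
have s'' : size l'' = (n + n)%N.
  rewrite /l'' size_rem //; move: hs; rewrite addSn => -[->].
  by rewrite addnS.
have sub'' : {subset l'' <= v :: l'}.
  by move=> u /mem_rem hu'; rewrite in_cons hu' orbT.
have hp'' : perm_eq l'' (map -%R l'').
  have A : perm_eq (v :: - v :: l'') (- v :: map -%R l').
    apply: perm_trans hp; by rewrite perm_cons perm_sym.
  have B : perm_eq (- v :: map -%R l') (- v :: v :: map -%R l'').
    rewrite perm_cons; have := perm_map -%R P1; by rewrite /= opprK.
  have C : perm_eq (- v :: v :: map -%R l'') (v :: - v :: map -%R l'').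
    change (perm_eq ([:: - v] ++ [:: v] ++ map -%R l'') ([:: v] ++ [:: - v] ++ map -%R l'')).
    by rewrite perm_catCA.
  have := perm_trans A (perm_trans B C).
  by rewrite !perm_cons.
have [b'' [sb'' subb'' covb'']] := IH l'' s'' (fun u hu' => hu u (sub'' u hu')) hp''.
exists (v :: b''); split.
- by rewrite /= sb''.
- move=> u; rewrite in_cons => /orP[/eqP ->|hub]; first exact: mem_head.
  exact: sub'' (subb'' u hub).
- move=> u; rewrite in_cons => /orP[/eqP ->|hul']; first by left; exact: mem_head.
  move: hul'; rewrite (perm_mem P1) in_cons => /orP[/eqP ->|hul''].
    by right; rewrite opprK mem_head.
  by case: (covb'' u hul'') => h; [left|right]; rewrite in_cons h orbT.
Qed.

Lemma pairing {R : realType} {d : nat} (w : 'I_(d + d) -> 'rV[R]_d) :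
  on_sphere w -> antipodal w ->
  exists b : 'I_d -> 'rV[R]_d, (forall j, dotv (b j) (b j) = 1) /\
    forall i, exists j, w i = b j \/ w i = - b j.
Proof.
move=> hw [sg [bs hs]].
pose l := [seq w i | i <- enum 'I_(d + d)].
have hl : size l = (d + d)%N by rewrite size_map size_enum_ord.
have hu : forall v, v \in l -> dotv v v = 1.
  move=> v /mapP[i _ ->]; have := hw i; rewrite inE; exact.
have hp : perm_eq l (map -%R l).
  have -> : map -%R l = [seq w i | i <- [seq sg i | i <- enum 'I_(d + d)]].
    by rewrite -map_comp -map_comp; apply: eq_map => i /=; rewrite hs.
  apply: perm_map; apply: uniq_perm; first exact: enum_uniq.
    by rewrite map_inj_uniq ?enum_uniq //; apply: bij_inj.
  move=> i; rewrite mem_enum; symmetry.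
  case: bs => sg' _ K; rewrite -[i]K; apply: map_f; exact: mem_enum.
have [b [sb subb covb]] := seqpair d l hl hu hp.
exists (fun j => nth 0 b j); split.
  by move=> j; apply: hu; apply: subb; apply: mem_nth; rewrite sb ltn_ord.
move=> i.
have wl : w i \in l by apply: map_f; exact: mem_enum.
case: (covb _ wl) => h.
  have hi : (index (w i) b < d)%N by have := index_mem (w i) b; rewrite h sb.
  by exists (Ordinal hi); left; rewrite /= nth_index.
have hi : (index (- w i) b < d)%N by have := index_mem (- w i) b; rewrite h sb.
by exists (Ordinal hi); right; rewrite /= nth_index // opprK.
Qed.


Lemma term_lb {R : realType} (g : R -> \bar R) (s t : R) :
  GH (fine \o g) ->
  (forall t : R, -1 <= t < 1 -> g t \is a fin_num) ->
  {within `[-1, 1[, continuous (fine \o g)} ->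
  g t @[t --> (1 : R)^'-] --> g 1 ->
  0 < s < 1 -> -1 <= t <= 1 ->
  ((hh (fine \o g) s + H1 (fine \o g) s / (2 * s) * (t * t - s * s))%:E
     <= g t + g (- t)%R)%E.
Proof.
move=> hG gfin gc g1 hs.
wlog t0 : t / 0 <= t.
  move=> W /andP[t1 t2]; case: (lerP 0 t) => [tp|tn]; first by apply: W => //; rewrite t1.
  have := W (- t); rewrite opprK mulrNN addeC; apply; first by lra.
  by apply/andP; split; lra.
move=> /andP[t1 t2].
case: (eqVneq t 1) => [->|tn1].
  set p := hh (fine \o g) s; set q := H1 (fine \o g) s / (2 * s).
  have := endpoint g (p - q * (s * s)) q gfin gc g1.
  have -> : p - q * (s * s) + q = p + q * (1 * 1 - s * s).
    by move: p q => p q; ring.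
  apply => u hu.
  have := phi_ineq (t := u) hG hs (introT andP (conj (ltW (andP hu).1) (andP hu).2)).
  rewrite -/p -/q /hh /=.
  by move: p q (fine (g u)) (fine (g (- u))) => p q a b; lra.
have tl1 : t < 1 by rewrite lt_def eq_sym tn1 t2.
rewrite -(fineK (gfin t _)); last by rewrite tl1 andbT; lra.
rewrite -(fineK (gfin (- t) _)); last by apply/andP; split; lra.
rewrite -EFinD lee_fin.
exact: (phi_ineq hG hs (introT andP (conj t0 tl1))).
Qed.

Lemma cross_sum {R : realType} {d : nat} (a : 'I_d -> 'rV[R]_d) (F : R -> \bar R) x :
  (\sum_(i < d + d) F (dotv x (cross_config a i)) =
   \sum_(j < d) (F (dotv x (a j)) + F (- dotv x (a j))%R))%E.
Proof.
rewrite big_split_ord big_split /=; congr (_ + _)%E; apply: eq_bigr => j _; rewrite /cross_config.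
  have -> : fintype.split (lshift d j) = inl j.
    by rewrite -[lshift d j]/(unsplit (inl j)) unsplitK.
  by [].
have -> : fintype.split (rshift d j) = inr j.
  by rewrite -[rshift d j]/(unsplit (inr j)) unsplitK.
by rewrite /= dotvNr.
Qed.

Lemma sq_le1 {R : realType} (t : R) : t * t <= 1 -> -1 <= t <= 1.
Proof.
move=> h; apply/andP; split.
  case: (lerP (-1) t) => // h1.
  have : 0 < (- 1 - t) * (1 - t) by apply: mulr_gt0; lra.
  lra.
case: (lerP t 1) => // h1.
have : 0 < (t - 1) * (t + 1) by apply: mulr_gt0; lra.
lra.
Qed.

Lemma lbA {R : realType} {d : nat} (g : R -> \bar R) (a : 'I_d -> 'rV[R]_d) (s : R) x :
  GH (fine \o g) ->
  (forall t : R, -1 <= t < 1 -> g t \is a fin_num) ->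
  {within `[-1, 1[, continuous (fine \o g)} ->
  g t @[t --> (1 : R)^'-] --> g 1 ->
  0 < s < 1 -> d%:R * (s * s) = 1 ->
  (forall i j, dotv (a i) (a j) = (i == j)%:R) ->
  dotv x x = 1 ->
  ((d%:R * hh (fine \o g) s)%:E <= \sum_(i < d + d) g (dotv x (cross_config a i)))%E.
Proof.
move=> hG gfin gc g1 hs ds ha hx.
rewrite cross_sum.
have oc := orth_complete a ha x; rewrite hx in oc.
set p := hh (fine \o g) s; set q := H1 (fine \o g) s / (2 * s).
have key : forall j : 'I_d, true ->
    ((p + q * (dotv x (a j) * dotv x (a j) - s * s))%:E <=
     g (dotv x (a j)) + g (- dotv x (a j))%R)%E.
  move=> j _; apply: term_lb => //.
  apply: sq_le1; rewrite -oc (bigD1 j) //= expr2 lerDl.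
  by apply: sumr_ge0 => i _; rewrite sqr_ge0.
apply: le_trans (lee_sum _ key).
clearbody p q.
rewrite sumEFin lee_fin big_split /= -mulr_sumr big_split /= sumr_const card_ord.
rewrite sumr_const card_ord.
have -> : \sum_(i < d) dotv x (a i) * dotv x (a i) = 1.
  by rewrite -oc; apply: eq_bigr => i _; rewrite expr2.
have -> : (- (s * s)) *+ d = -1 by rewrite -mulr_natl mulrN ds.
rewrite -mulr_natl; lra.
Qed.

Lemma witness {R : realType} {d : nat} (g : R -> \bar R) (a : 'I_d -> 'rV[R]_d) (s : R) :
  (forall t : R, -1 <= t < 1 -> g t \is a fin_num) ->
  0 < s < 1 -> d%:R * (s * s) = 1 ->
  (forall i j, dotv (a i) (a j) = (i == j)%:R) ->
  exists x0, dotv x0 x0 = 1 /\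
    \sum_(i < d + d) g (dotv x0 (cross_config a i)) = ((d%:R * hh (fine \o g) s)%:E)%E.
Proof.
move=> gfin /andP[s0 s1] ds ha.
pose x0 := s *: \sum_j a j.
have xa i : dotv x0 (a i) = s.
  rewrite dotvZl dotv_suml (bigD1 i) //= ha eqxx big1 ?addr0 ?mulr1 //.
  by move=> j /negbTE; rewrite ha => ->.
exists x0; split.
  rewrite {1}/x0 dotvZl dotv_suml.
  under eq_bigr => j _ do rewrite dotvC xa.
  by rewrite sumr_const card_ord -mulr_natl mulrA (mulrC s) -mulrA ds.
rewrite cross_sum.
under eq_bigr => j _ do rewrite xa.
rewrite -(fineK (gfin s _)); last by apply/andP; split; lra.
rewrite -(fineK (gfin (- s) _)); last by apply/andP; split; lra.
by rewrite -EFinD sumEFin sumr_const card_ord mulr_natl.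
Qed.

Lemma partB {R : realType} {d : nat} (g : R -> \bar R) (w : 'I_(d + d) -> 'rV[R]_d)
  (s : R) x :
  GH (fine \o g) ->
  (forall t : R, -1 <= t < 1 -> g t \is a fin_num) ->
  0 < s < 1 -> (forall i, `|dotv x (w i)| <= s) -> antipodal w ->
  (\sum_(i < d + d) g (dotv x (w i)) <= (d%:R * hh (fine \o g) s)%:E)%E.
Proof.
move=> hG gfin /andP[s0 s1] hx [sg [bs hs]].
set G := fine \o g.
have hxi i : -1 <= dotv x (w i) < 1.
  by have := hx i; rewrite ler_norml => /andP[h1 h2]; apply/andP; split; lra.
rewrite (eq_bigr (fun i => (G (dotv x (w i)))%:E)); last first.
  by move=> i _; rewrite /G /= fineK // gfin.
rewrite sumEFin lee_fin.
have E : \sum_(i < d + d) G (dotv x (w i)) = \sum_(i < d + d) G (- dotv x (w i)).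
  rewrite (reindex_inj (bij_inj bs)) /=.
  by apply: eq_bigr => i _; rewrite hs dotvNr.
have F : \sum_(i < d + d) hh G (dotv x (w i)) <= \sum_(i < d + d) hh G s.
  apply: ler_sum => i _.
  have -> : hh G (dotv x (w i)) = hh G `|dotv x (w i)|.
    case: (lerP 0 (dotv x (w i))) => h; first by rewrite ger0_norm.
    by rewrite ltr0_norm // /hh opprK addrC.
  by apply: hmono hG _ (hx i) s1.
move: F; rewrite sumr_const card_ord /hh big_split /= -E.
move: (\sum_(i < d + d) G (dotv x (w i))) => S.
rewrite mulrnDr mulr_natl; lra.
Qed.

Theorem corollary3p3 (R : realType) (d : nat) (g : R -> \bar R)
  (hd : (2 <= d)%N)
  (gfin : forall t : R, -1 <= t < 1 -> g t \is a fin_num)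
  (gcont : {within `[-1, 1[, continuous (fine \o g)})
  (g1 : g t @[t --> 1^'-] --> g 1)
  (gder : forall t : R, -1 < t < 1 -> derivable (fine \o g) t 1)
  (gder2 : forall t : R, -1 < t < 1 -> derivable (derive1 (fine \o g)) t 1)
  (g2nn : forall t : R, -1 < t < 1 -> 0 <= derive1n 2 (fine \o g) t)
  (g2cvx : convex_on_oo (-1) 1 (derive1n 2 (fine \o g)))
  (w : 'I_(d + d) -> 'rV[R]_d) (a : 'I_d -> 'rV[R]_d)
  (hw : on_sphere w) (hwa : antipodal w)
  (ha : forall i j, dotv (a i) (a j) = (i == j)%:R) :
  (Pg g w <= Pg g (cross_config a))%E /\
  Pg g (cross_config a) =
    ((d%:R : R)%:E * (g (1 / Num.sqrt (d%:R : R))%R + g (- (1 / Num.sqrt (d%:R : R)))%R))%E.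
Proof.
have hG : GH (fine \o g) by split.
set s := 1 / Num.sqrt (d%:R : R).
have d0 : (0 < d)%N by apply: leq_trans hd.
have sqd : Num.sqrt (d%:R : R) ^+ 2 = d%:R by rewrite sqr_sqrtr // ler0n.
have sqp : 0 < Num.sqrt (d%:R : R) by rewrite sqrtr_gt0 ltr0n.
have s0 : 0 < s by rewrite /s divr_gt0.
have ds : d%:R * (s * s) = 1.
  by rewrite /s !div1r -invfM -expr2 sqd mulfV // gt_eqF // ltr0n.
have d2 : 2 <= (d%:R : R) by rewrite (ler_nat R 2 d).
have s1 : s < 1.
  case: (ltP s 1) => // h.
  have h1 : 1 <= s * s by apply: mulr_ege1.
  have : 2 * (s * s) <= d%:R * (s * s) by rewrite ler_wpM2r // mulr_ge0 ?ltW.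
  rewrite ds; move: h1; move: (s * s) => u; lra.
have hs : 0 < s < 1 by rewrite s0 s1.
have gs : g s = (fine (g s))%:E by rewrite fineK // gfin // s1 andbT; lra.
have gms : g (- s) = (fine (g (- s)))%:E.
  by rewrite fineK // gfin //; apply/andP; split; lra.
have PC : Pg g (cross_config a) = (d%:R * hh (fine \o g) s)%:E.
  have [x0 [hx0 Ex0]] := witness g a s gfin hs ds ha.
  apply/le_anti/andP; split.
    by apply: ereal_inf_lbound; exists x0.
  apply: le_ereal_inf_tmp => _ [x hx <-].
  exact: (lbA g a s x hG gfin gcont g1 hs ds ha hx).
split; last by rewrite PC gs gms -EFinD -EFinM.
rewrite PC.
have [b [hb hwb]] := pairing w hw hwa.
have [x [hx hxb]] := LA b d0 hb.
have hxw i : `|dotv x (w i)| <= s.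
  have [j [->|->]] := hwb i; first exact: hxb.
  by rewrite dotvNr normrN; exact: hxb.
apply: le_trans (partB g w s x hG gfin hs hxw hwa).
by apply: ereal_inf_lbound; exists x.
Qed.
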